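(* Let $J\in\mathbb{R}^{m\times n}$ have full column rank, let $H\in\mathbb{R}^{m\times m}$ be symmetric positive definite, $q\in\mathbb{R}^m$, $c\in\mathbb{R}$, and consider minimizing $L(\theta)=\mathcal{L}(J\theta)$ with $\mathcal{L}(v)=\tfrac12 v^\top Hv+v^\top q+c$. Assume consistency: $J\theta^*=\arg\min_v\mathcal{L}(v)$ for some $\theta^*$. Let $\tilde H=(J^\top J)^{-1/2}J^\top HJ(J^\top J)^{-1/2}$. Then natural gradient descent with regularization $\lambda=0$ and step size $\eta=1/\lambda_{\max}(\tilde H)$, namely $$\theta_{t+1}=\theta_t-\eta\,(J^\top J)^{-1}J^\top(HJ\theta_t+q),$$ satisfies for all $t\ge0$ $$\|\theta_t-\theta^*\|_{J^\top J}\le\big(1-\kappa^{-1}(\tilde H)\big)^t\|\theta_0-\theta^*\|_{J^\top J}.$$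
   Context: $\|x\|_{A}=\sqrt{x^\top Ax}$ and $\kappa(\tilde H)=\lambda_{\max}(\tilde H)/\lambda_{\min}(\tilde H)$. *)

(* Defs.v *)
From HB Require Import structures.
From mathcomp Require Import all_boot all_order all_algebra.
Set Implicit Arguments. Unset Strict Implicit. Unset Printing Implicit Defensive.
Import Order.TTheory GRing.Theory Num.Theory.
Local Open Scope ring_scope.

Section Defs.
Variable R : rcfType.

Definition spd (k : nat) (A : 'M[R]_k) : Prop :=
  A^T = A /\ forall x : 'cV[R]_k, x != 0 -> 0 < (x^T *m A *m x) 0 0.

Definition mnorm (k : nat) (A : 'M[R]_k) (x : 'cV[R]_k) : R :=
  Num.sqrt ((x^T *m A *m x) 0 0).

Definition quadL (m : nat) (H : 'M[R]_m) (q : 'cV[R]_m) (c : R) (v : 'cV[R]_m) : R :=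
  2^-1 * (v^T *m H *m v) 0 0 + (v^T *m q) 0 0 + c.

Fixpoint ngd (m n : nat) (J : 'M[R]_(m, n)) (H : 'M[R]_m) (q : 'cV[R]_m)
    (eta : R) (theta0 : 'cV[R]_n) (t : nat) : 'cV[R]_n :=
  match t with
  | 0 => theta0
  | t'.+1 =>
      let th := ngd J H q eta theta0 t' in
      th - eta *: (invmx (J^T *m J) *m J^T *m (H *m J *m th + q))
  end.

Definition is_lambda_max (k : nat) (A : 'M[R]_k) (l : R) : Prop :=
  eigenvalue A l /\ forall b, eigenvalue A b -> b <= l.
Definition is_lambda_min (k : nat) (A : 'M[R]_k) (l : R) : Prop :=
  eigenvalue A l /\ forall b, eigenvalue A b -> l <= b.

End Defs.

(* Main.v *)
Require Import Defs.
From HB Require Import structures.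
From mathcomp Require Import all_boot all_order all_algebra.
From mathcomp Require Import complex.
From mathcomp Require Import spectral sesquilinear.
From mathcomp Require Import lra ring.
Import Order.TTheory GRing.Theory Num.Theory.
Local Open Scope ring_scope.

Lemma quad_diag (C : numClosedFieldType) n (z : 'cV[C]_n) (e : 'rV[C]_n) :
  ((map_mx Num.conj z^T *m diag_mx e) *m z) 0 0 = \sum_i e 0 i * (z i 0 * (z i 0)^*).
Proof.
rewrite mul_mx_diag !mxE. apply: eq_bigr => i _. rewrite !mxE.
by rewrite [_ * e 0 i]mulrC -mulrA [(z i 0)^* * _]mulrC.
Qed.

Lemma quad1 (C : numClosedFieldType) n (z : 'cV[C]_n) :
  (map_mx Num.conj z^T *m z) 0 0 = \sum_i (z i 0 * (z i 0)^*).
Proof.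
rewrite !mxE. apply: eq_bigr => i _. rewrite !mxE. by rewrite mulrC.
Qed.

Lemma key (R : rcfType) n (M : 'M[R]_n) (l a : R) (y : 'cV[R]_n) :
  M^T = M -> 0 < l -> (forall b, eigenvalue M b -> a <= b /\ b <= l) ->
  (((1%:M - l^-1 *: M) *m y)^T *m ((1%:M - l^-1 *: M) *m y)) 0 0
     <= (1 - a / l) ^+ 2 * (y^T *m y) 0 0.
Proof.
move=> MT lpos hb.
set N := 1%:M - l^-1 *: M.
pose f := real_complex R.
pose A := map_mx f M.
pose P := spectralmx A. pose d := spectral_diag A.
have Aherm : A \is hermsymmx.
  apply: realsym_hermsym.
    apply/is_hermitianmxP; rewrite expr0 scale1r map_mx_id //.
    by rewrite /A map_trmx MT.
  apply/mxOverP => i j. rewrite mxE. apply/complex_realP. by exists (M i j).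
have Adec : A = invmx P *m diag_mx d *m P.
  by apply/orthomx_spectralP/hermitian_normalmx.
have Puni : P \is unitarymx by apply: spectral_unitarymx.
have Punit : P \in unitmx by apply: spectral_unit.
have dreal : d \is a realmx by apply: hermitian_spectral_diag_real.
have Asym : A^T = A by rewrite /A map_trmx MT.
have dR : forall i, exists k, d 0 i = f k /\ a <= k <= l.
  move=> i.
  have /complex_realP [k dk] : d 0 i \is Num.real by apply: (mxOverP dreal).
  exists k; split => //.
  have [h1 h2] : a <= k /\ k <= l.
    apply: hb.
    rewrite eigenvalue_root_char -(fmorph_root f) map_char_poly -/A.
    rewrite -eigenvalue_root_char. suff HH : eigenvalue A (d 0 i) by rewrite dk in HH; exact HH.
    apply/eigenvalueP; exists (row i P).
      rewrite Adec !mulmxA -!row_mul mulmxV // mul1mx.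
      by apply/rowP => j; rewrite mul_diag_mx !mxE.
    rewrite rowE mulmx_free_eq0 ?row_free_unit //.
    apply/eqP => /matrixP /(_ 0 i); rewrite !mxE !eqxx /= => /eqP.
    by rewrite oner_eq0.
  by rewrite h1 h2.
pose c := f (l^-1).
pose e := \row_i (1 - c * d 0 i).
pose NC := map_mx f N.
have NCe : NC = invmx P *m diag_mx e *m P.
  have De : diag_mx e = 1%:M - c *: diag_mx d.
    apply/matrixP => i j; rewrite !mxE.
    by case: eqP => _ /=; rewrite ?mulr1n ?mulr0n ?mulr0 ?subr0.
  rewrite De mulmxBr mulmxBl mulmx1 mulVmx //.
  rewrite -scalemxAr -scalemxAl -Adec.
  rewrite /NC /N map_mxB map_mx1 map_mxZ -/A; reflexivity.
have NCsym : NC^T = NC.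
  rewrite /NC map_trmx; congr map_mx.
  by rewrite /N linearB /= trmx1 linearZ /= MT.
pose e2 : 'rV[R[i]]_n := \row_j (e 0 j * e 0 j).
have NC2 : NC *m NC = invmx P *m diag_mx e2 *m P.
  rewrite NCe !mulmxA.
  rewrite -(mulmxA (invmx P *m diag_mx e) P) (mulmxV Punit) mulmx1.
  rewrite -(mulmxA (invmx P) (diag_mx e) (diag_mx e)) mulmx_diag. Timeout 30 reflexivity.
pose Y := map_mx f y. pose z := P *m Y.
have Yc : map_mx Num.conj Y^T = Y^T.
  apply/matrixP => i j; rewrite !mxE; apply: conj_Creal.
  by apply/complex_realP; exists (y j i).
have zc : map_mx Num.conj z^T = Y^T *m invmx P.
  by rewrite /z trmx_mul map_mxM Yc invmx_unitary.
have fE : forall B : 'M[R]_1, f (B 0 0) = (map_mx f B) 0 0 by move=> B; rewrite mxE.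
have L1 : f (((N *m y)^T *m (N *m y)) 0 0) =
   ((map_mx Num.conj z^T *m diag_mx e2) *m z) 0 0.
  rewrite fE map_mxM -map_trmx map_mxM -/NC -/Y trmx_mul NCsym.
  rewrite zc /z !mulmxA -(mulmxA (Y^T)) NC2 !mulmxA. Timeout 30 reflexivity.
have R1 : f ((y^T *m y) 0 0) = (map_mx Num.conj z^T *m z) 0 0.
  rewrite fE map_mxM -map_trmx -/Y zc /z mulmxA -(mulmxA (Y^T)) (mulVmx Punit) mulmx1.
  Timeout 30 reflexivity.
suff HC : f (((N *m y)^T *m (N *m y)) 0 0) <= f ((1 - a / l) ^+ 2) * f ((y^T *m y) 0 0).
  rewrite -lecR rmorphM; exact HC.
rewrite L1 R1 quad_diag quad1 mulr_sumr.
apply: ler_sum => i _; rewrite mxE.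
apply: ler_wpM2r; first exact: mul_conjC_ge0.
have [k [dk hk]] := dR i.
rewrite /e mxE dk /c.
have H : (1 - l^-1 * k) * (1 - l^-1 * k) <= (1 - a / l) ^+ 2.
  case/andP: hk => h1 h2.
  have u0 : 0 < l^-1 by rewrite invr_gt0.
  have ul : l^-1 * l = 1 by rewrite mulVf // gt_eqF.
  have p1 : 0 <= l^-1 * (l - k) by rewrite mulr_ge0 ?subr_ge0 // ltW.
  have p2 : 0 <= l^-1 * (k - a) by rewrite mulr_ge0 ?subr_ge0 // ltW.
  rewrite mulrDr mulrN ul in p1. rewrite mulrDr mulrN in p2.
  have q1 : 0 <= 1 - l^-1 * k by lra.
  have q2 : 1 - l^-1 * k <= 1 - a / l by rewrite (mulrC a); lra.
  by rewrite expr2; apply: ler_pM.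
move: H; rewrite -lecR rmorphM rmorphB rmorph1 rmorphM => H; exact H.
Qed.

Section Aux.
Set Implicit Arguments. Unset Strict Implicit.
Variable R : rcfType.

Lemma sumsq k (x : 'cV[R]_k) : (x^T *m x) 0 0 = \sum_i x i 0 ^+ 2.
Proof. rewrite !mxE; apply: eq_bigr => i _; by rewrite !mxE expr2. Qed.

Lemma sumsq_ge0 k (x : 'cV[R]_k) : 0 <= (x^T *m x) 0 0.
Proof. rewrite sumsq; apply: sumr_ge0 => i _; exact: sqr_ge0. Qed.

Lemma sumsq_gt0 k (x : 'cV[R]_k) : x != 0 -> 0 < (x^T *m x) 0 0.
Proof.
move=> xn0; rewrite lt_def sumsq_ge0 andbT sumsq psumr_eq0; last by move=> i _; exact: sqr_ge0.
apply: contra xn0 => /allP h; apply/eqP/matrixP => i j.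
rewrite ord1 !mxE; apply/eqP; rewrite -sqrf_eq0; exact: (implyP (h i (mem_index_enum _))).
Qed.

Lemma pd_unit k (Q : 'M[R]_k) :
  (forall x : 'cV_k, x != 0 -> 0 < (x^T *m Q *m x) 0 0) -> Q \in unitmx.
Proof.
move=> pd; rewrite -row_free_unit -kermx_eq0; apply/eqP/row_matrixP => i.
rewrite row0; apply/eqP; apply: contraT => hu.
have hx : (row i (kermx Q))^T != 0.
  by apply: contra hu => /eqP h; rewrite -[row _ _]trmxK h trmx0.
have := pd _ hx; rewrite trmxK -row_mul mulmx_ker row0 mul0mx mxE.
by rewrite ltxx.
Qed.

Lemma entry_tr (B : 'M[R]_1) : B 0 0 = B^T 0 0.
Proof. by rewrite mxE. Qed.

Lemma addE k l (A B : 'M[R]_(k, l)) i j : (A + B) i j = A i j + B i j.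
Proof. by rewrite mxE. Qed.

Lemma quadL_shift k (H : 'M[R]_k) q c v w : H^T = H ->
  quadL H q c (v + w) =
  quadL H q c v + (w^T *m (H *m v + q)) 0 0 + 2^-1 * (w^T *m H *m w) 0 0.
Proof.
move=> HT; rewrite /quadL.
have E : (v^T *m H *m w) 0 0 = (w^T *m H *m v) 0 0.
  by rewrite entry_tr !trmx_mul trmxK HT mulmxA.
rewrite [(v + w)^T]linearD /= !mulmxDl (mulmxDr _ v w) (mulmxDr _ v w).
rewrite !addE E (mulmxDr _ (H *m v) q) addE mulmxA.
by field.
Qed.

End Aux.

Theorem proposition3 (R : rcfType) (m n : nat)
    (J : 'M[R]_(m, n)) (H : 'M[R]_m) (q : 'cV[R]_m) (c : R)
    (thstar : 'cV[R]_n) (S : 'M[R]_n) (lmax lmin : R) (theta0 : 'cV[R]_n) :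
  \rank J = n ->
  spd H ->
  (forall v : 'cV[R]_m, quadL H q c (J *m thstar) <= quadL H q c v) ->
  spd S -> S *m S = invmx (J^T *m J) ->
  is_lambda_max (S *m J^T *m H *m J *m S) lmax ->
  is_lambda_min (S *m J^T *m H *m J *m S) lmin ->
  forall t : nat,
    mnorm (J^T *m J) (ngd J H q (lmax^-1) theta0 t - thstar)
      <= (1 - (lmax / lmin)^-1) ^+ t * mnorm (J^T *m J) (theta0 - thstar).
Proof.
move=> rkJ [HT Hpd] Hmin [ST Spd] SS [lmaxE lmaxB] [lminE lminB].
set G := J^T *m J.
have Jinj : forall x : 'cV_n, x != 0 -> J *m x != 0.
  move=> x xn0; apply: contra xn0 => /eqP Jx.
  have rf : row_free J^T by rewrite /row_free mxrank_tr rkJ.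
  have : x^T *m J^T == 0 by rewrite -trmx_mul Jx trmx0.
  rewrite mulmx_free_eq0 // => /eqP h.
  by rewrite -[x]trmxK h trmx0.
have Gpd : forall x : 'cV_n, x != 0 -> 0 < (x^T *m G *m x) 0 0.
  move=> x xn0; rewrite /G mulmxA -trmx_mul -mulmxA.
  exact: sumsq_gt0 (Jinj _ xn0).
have Gunit : G \in unitmx by apply: pd_unit.
have Sunit : S \in unitmx.
  by have := unitmx_inv G; rewrite Gunit -SS unitmx_mul => /andP[].
have SG : S *m G = invmx S.
  by rewrite -(mulKmx Sunit (S *m G)) (mulmxA S S G) SS mulVmx // mulmx1.
have SGS : S *m G *m S = 1%:M by rewrite SG mulVmx.
have gz : H *m J *m thstar + q = 0.
  rewrite -mulmxA; set v0 := J *m thstar; set g := H *m v0 + q.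
  apply/eqP; apply: contraT => gn0.
  have a0 := sumsq_gt0 gn0.
  have b0 : 0 < (g^T *m H *m g) 0 0 := Hpd g gn0.
  set a := (g^T *m g) 0 0 in a0; set b := (g^T *m H *m g) 0 0 in b0.
  have := Hmin (v0 + (- (a / b)) *: g).
  rewrite -/v0 quadL_shift // -/g.
  set E1 := ((_ *: g)^T *m g) 0 0.
  set E2 := ((_ *: g)^T *m H *m (_ *: g)) 0 0.
  have e1 : E1 = -(a/b) * a.
    by rewrite /E1 linearZ /= -scalemxAl mxE.
  have e2 : E2 = -(a/b) * (-(a/b) * b).
    by rewrite /E2 linearZ /= mxE [(_ *: g)^T]linearZ /= -!scalemxAl mxE.
  rewrite e1 e2 => h.
  have neg : -(a/b)*a + 2^-1*(-(a/b)*(-(a/b)*b)) = - (a*a / (2*b)).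
    field; rewrite gt_eqF //.
  have pos : 0 < a*a/(2*b) by rewrite divr_gt0 ?mulr_gt0.
  suff : (0:R) < 0 by rewrite ltxx.
  lra.
set Mt := S *m J^T *m H *m J *m S.
have Mtsym : Mt^T = Mt by rewrite /Mt !trmx_mul trmxK ST HT !mulmxA.
have lmax_pos : 0 < lmax.
  case/eigenvalueP: lmaxE => v hv vn0.
  have vT0 : v^T != 0.
    by apply: contra vn0 => /eqP h; rewrite -[v]trmxK h trmx0.
  have x0 : J *m (S *m v^T) != 0.
    apply: Jinj; apply: contra vT0 => /eqP h.
    by rewrite -(mulKmx Sunit v^T) h mulmx0.
  have P1 := Hpd _ x0.
  have P2 := sumsq_gt0 vT0.
  have hv' : v *m S *m J^T *m H *m J *m S = lmax *: v by rewrite /Mt !mulmxA in hv.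
  have E : ((J *m (S *m v^T))^T *m H *m (J *m (S *m v^T))) 0 0 = lmax * ((v^T)^T *m v^T) 0 0.
    by rewrite trmxK !trmx_mul trmxK ST !mulmxA hv' -scalemxAl mxE.
  by move: P1; rewrite E pmulr_lgt0.
have lminmax : lmin <= lmax := lmaxB _ lminE.
have rho0 : 0 <= 1 - lmin / lmax by rewrite subr_ge0 ler_pdivrMr // mul1r.
have rhoE : (lmax / lmin)^-1 = lmin / lmax by rewrite invf_div.
have hbnd : forall b, eigenvalue Mt b -> lmin <= b /\ b <= lmax.
  by move=> b hb; split; [apply: lminB | apply: lmaxB].
have normE : forall x, mnorm G (S *m x) = Num.sqrt ((x^T *m x) 0 0).
  move=> x; rewrite /mnorm trmx_mul ST.
  have -> : x^T *m S *m G *m (S *m x) = x^T *m (S *m G *m S) *m x by rewrite !mulmxA.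
  by rewrite SGS mulmx1.
have img : forall y : 'cV_n,
    (1%:M - lmax^-1 *: (invmx G *m J^T *m H *m J)) *m (S *m y)
      = S *m ((1%:M - lmax^-1 *: Mt) *m y).
  move=> y; rewrite (mulmxBl 1%:M) mul1mx -scalemxAl !mulmxA (mulmxBr S 1%:M) mulmx1.
  rewrite -scalemxAr (mulmxBl S) -scalemxAl /Mt !mulmxA SS; reflexivity.
have step : forall e, mnorm G ((1%:M - lmax^-1 *: (invmx G *m J^T *m H *m J)) *m e)
    <= (1 - lmin / lmax) * mnorm G e.
  move=> e; set y := invmx S *m e.
  have ey : e = S *m y by rewrite /y mulKVmx.
  rewrite ey img !normE.
  apply: le_trans (ler_wsqrtr (@key R n Mt lmax lmin y Mtsym lmax_pos hbnd)) _.
  by rewrite sqrtrM ?sqr_ge0 // sqrtr_sqr ger0_norm.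
have qE : q = - (H *m J *m thstar).
  by apply/eqP; rewrite -addr_eq0 addrC gz.
have rec : forall t, ngd J H q lmax^-1 theta0 t.+1 - thstar =
    (1%:M - lmax^-1 *: (invmx G *m J^T *m H *m J)) *m (ngd J H q lmax^-1 theta0 t - thstar).
  move=> t /=; set th := ngd J H q lmax^-1 theta0 t.
  rewrite qE -mulmxBr mulmxBl mul1mx -scalemxAl !mulmxA.
  by rewrite addrAC.
rewrite rhoE; elim => [|t IH]; first by rewrite expr0 mul1r.
rewrite rec; apply: le_trans (step _) _.
by rewrite exprS -mulrA ler_wpM2l.
Qed.
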